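(* Let $\alpha\in(\pi/8,3\pi/8)$ with $\alpha/\pi\notin\mathbb{Q}$, $\beta=\alpha-\pi/2$, $\rho=0.01$, $A_1=\rho R(\alpha)$, $A_2=\rho R(\beta)$ where $R(\theta)=\begin{bmatrix}\cos\theta&-\sin\theta\\ \sin\theta&\cos\theta\end{bmatrix}$, and $c(x)=x_1^2+2x_2^2$ on $\mathbb{R}^2$. Let $J^\star$ be the optimal value function of $\{A_1,A_2\}$ with cost $c$, $\tilde J^\star(\theta)=J^\star([\cos\theta,\sin\theta]^\top)$, $\Delta\tilde J^\star(\theta)=\tilde J^\star(\theta+\alpha)-\tilde J^\star(\theta+\beta)$, $\mu=\pi/4-\alpha$, $\delta=0.01$. Let $\nu\in(\mu-\delta,\mu+\delta)$ satisfy $\Delta\tilde J^\star(\nu)=0$. Then $\tilde J^\star$ is not differentiable at $\nu$.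
   Context: For the switched linear system $\xi(t+1)=A_{\sigma(t)}\xi(t)$ with switching signal $\sigma:\mathbb{N}\to\{1,2\}$, $\xi(t,x,\sigma)$ denotes the solution with $\xi(0)=x$, and $J^\star(x)=\inf_\sigma\sum_{t=0}^\infty c(\xi(t,x,\sigma))$. (Such a $\nu$ exists and is unique in $(\mu-\delta,\mu+\delta)$.) *)

(* Defs.v *)
From Stdlib Require Import Reals.
From Coquelicot Require Import Coquelicot.
Open Scope R_scope.

Definition vec2 := (R * R)%type.

(* The rotation matrix R(theta) = [[cos, -sin],[sin, cos]] scaled by rho,
   applied to a vector. *)
Definition rot_scaled (rho theta : R) (x : vec2) : vec2 :=
  (rho * (cos theta * fst x - sin theta * snd x),
   rho * (sin theta * fst x + cos theta * snd x)).

(* Switched linear system xi(t+1) = A_{sigma(t)} xi(t), sigma : nat -> {1,2};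
   mode 1 is encoded as [true], mode 2 as [false]. *)
Fixpoint xi (A1 A2 : vec2 -> vec2) (x : vec2) (sigma : nat -> bool) (t : nat) : vec2 :=
  match t with
  | O => x
  | S t' => (if sigma t' then A1 else A2) (xi A1 A2 x sigma t')
  end.

(* Optimal value J*(x) = inf_sigma sum_{t>=0} c(xi(t,x,sigma)),
   as an extended real (infimum over the values of the convergent cost series;
   for the system of the statement all these series converge). *)
Definition J_star (A1 A2 : vec2 -> vec2) (c : vec2 -> R) (x : vec2) : Rbar :=
  Glb_Rbar (fun v => exists sigma : nat -> bool,
                is_series (fun t => c (xi A1 A2 x sigma t)) v).

Definition cost (x : vec2) : R := fst x ^ 2 + 2 * snd x ^ 2.

Definition Jtilde (rho alpha beta : R) (theta : R) : R :=
  real (J_star (rot_scaled rho alpha) (rot_scaled rho beta) cost (cos theta, sin theta)).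

(* Main.v *)
Require Import Defs.
From Stdlib Require Import Reals Lra Lia Psatz.
From Coquelicot Require Import Coquelicot.
Open Scope R_scope.

Definition ang (a1 a2 : R) (b : bool) : R := if b then a1 else a2.

Fixpoint phi (a1 a2 : R) (s : nat -> bool) (t : nat) : R :=
  match t with O => 0 | S t' => phi a1 a2 s t' + ang a1 a2 (s t') end.

Definition kk (x : R) : R := cos x ^ 2 + 2 * sin x ^ 2.

Lemma xi_formula r a1 a2 th s t :
  xi (rot_scaled r a1) (rot_scaled r a2) (cos th, sin th) s t =
  (r ^ t * cos (th + phi a1 a2 s t), r ^ t * sin (th + phi a1 a2 s t)).
Proof.
  induction t as [|t IH]; simpl.
  - rewrite Rplus_0_r. f_equal; ring.
  - rewrite IH. unfold rot_scaled; simpl.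
    replace (th + (phi a1 a2 s t + ang a1 a2 (s t))) with
      ((th + phi a1 a2 s t) + ang a1 a2 (s t)) by ring.
    set (u := th + phi a1 a2 s t). rewrite (cos_plus u), (sin_plus u). destruct (s t); simpl; f_equal; ring.

Qed.

Lemma term_eq r a1 a2 th s t :
  cost (xi (rot_scaled r a1) (rot_scaled r a2) (cos th, sin th) s t) =
  (r ^ 2) ^ t * kk (th + phi a1 a2 s t).
Proof.
  rewrite xi_formula. unfold cost, kk; simpl fst; simpl snd.
  replace ((r ^ 2) ^ t) with ((r ^ t) ^ 2) by (rewrite <- !pow_mult, Nat.mul_comm; reflexivity).
  ring.
Qed.

Lemma phi_S a1 a2 s t :
  phi a1 a2 s (S t) = ang a1 a2 (s 0%nat) + phi a1 a2 (fun n => s (S n)) t.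
Proof.
  induction t as [|t IH].
  - simpl. ring.
  - change (phi a1 a2 s (S (S t))) with (phi a1 a2 s (S t) + ang a1 a2 (s (S t))).
    rewrite IH. simpl. ring.
Qed.

Lemma kk_bounds x : 0 <= kk x <= 2.
Proof.
  unfold kk. pose proof (sin2_cos2 x). unfold Rsqr in H. nra.
Qed.

Lemma abs_sin_le w : Rabs (sin w) <= Rabs w.
Proof.
  assert (Hp : forall w, 0 < w -> Rabs (sin w) <= w).
  { intros v Hv. pose proof (sin_lt_x v Hv). pose proof (SIN_bound v).
    destruct (Rle_dec 1 v).
    - apply Rabs_le; lra.
    - pose proof (pre_sin_bound v 0 (Rlt_le _ _ Hv) ltac:(lra)) as [Hl _].
      unfold sin_approx, sin_term in Hl. simpl in Hl.
      apply Rabs_le; split; [|lra].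
      assert (v ^ 3 / 6 <= v * v) by (simpl; unfold Rdiv; nra).
      simpl in *. nra. }
  destruct (Rtotal_order w 0) as [H|[H|H]].
  - replace w with (- (- w)) by ring. rewrite sin_neg, !Rabs_Ropp, (Rabs_left w) by lra. apply Hp; lra.
  - subst. rewrite sin_0, Rabs_R0. lra.
  - rewrite (Rabs_right w) by lra. now apply Hp.
Qed.

Lemma kk_lip x y : kk y - kk x <= Rabs (y - x).
Proof.
  assert (E : kk y - kk x = sin (y + x) * sin (y - x)).
  { unfold kk. rewrite sin_plus, sin_minus.
    pose proof (sin2_cos2 x). pose proof (sin2_cos2 y). unfold Rsqr in *.
    nra. }
  rewrite E. pose proof (abs_sin_le (y - x)). pose proof (SIN_bound (y + x)).
  pose proof (Rle_abs (sin (y + x) * sin (y - x))). rewrite Rabs_mult in H1.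
  assert (Rabs (sin (y+x)) <= 1) by (apply Rabs_le; lra).
  pose proof (Rabs_pos (sin (y - x))). nra.
Qed.

Definition term r a1 a2 th s : nat -> R :=
  fun t => cost (xi (rot_scaled r a1) (rot_scaled r a2) (cos th, sin th) s t).

Lemma scalR (c : R) (a : nat -> R) l : is_series a l -> is_series (fun n => c * a n) (c * l).
Proof. intros H. exact (@is_series_scal R_AbsRing R_NormedModule c a l H). Qed.
Lemma plusR (a b : nat -> R) la lb : is_series a la -> is_series b lb ->
  is_series (fun n => a n + b n) (la + lb).
Proof. intros H1 H2. exact (@is_series_plus R_AbsRing R_NormedModule a b la lb H1 H2). Qed.

Lemma geom_r2 r : 0 < r < 1 -> is_series (fun n => (r ^ 2) ^ n) (/ (1 - r ^ 2)).
Proof. intros Hr. apply is_series_geom. rewrite Rabs_right by nra. nra. Qed.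

Lemma term_ex r a1 a2 th s : 0 < r < 1 -> ex_series (term r a1 a2 th s).
Proof.
  intros Hr. apply (@ex_series_le R_AbsRing R_CompleteNormedModule _ (fun n => 2 * ((r ^ 2) ^ n))).
  - intros n. unfold term. rewrite term_eq. pose proof (kk_bounds (th + phi a1 a2 s n)).
    assert (0 <= (r^2)^n) by (apply pow_le; nra).
    change (norm ?x) with (Rabs x).
    rewrite Rabs_right by nra. nra.
  - exists (2 * / (1 - r ^ 2)). exact (scalR 2 _ _ (geom_r2 r Hr)).
Qed.

Lemma series0 : Series (fun _ => 0) = 0.
Proof.
  assert (H: is_series (fun n:nat => 0 * ((1/2)^n)) (0 * (/ (1 - 1/2)))).
  { apply scalR. apply is_series_geom. rewrite Rabs_right; lra. }
  apply is_series_unique in H.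
  rewrite Rmult_0_l in H. etransitivity; [|exact H]. apply Series_ext. intros; ring.
Qed.

Lemma term_nonneg r a1 a2 th s v : 0 < r < 1 -> is_series (term r a1 a2 th s) v -> 0 <= v.
Proof.
  intros Hr H. apply is_series_unique in H. rewrite <- H, <- series0.
  apply Series_le; [|apply term_ex; auto].
  intros n; split; [lra|]. unfold term; rewrite term_eq.
  pose proof (kk_bounds (th + phi a1 a2 s n)). assert (0 <= (r^2)^n) by (apply pow_le; nra). nra.
Qed.

Lemma term_lip r a1 a2 x y s v : 0 < r < 1 -> is_series (term r a1 a2 x s) v ->
  exists v', is_series (term r a1 a2 y s) v' /\ v' <= v + / (1 - r ^ 2) * Rabs (x - y).
Proof.
  intros Hr H. destruct (term_ex r a1 a2 y s Hr) as [v' Hv']. exists v'; split; auto.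
  assert (Hb : is_series (fun n => (term r a1 a2 x s n) + (Rabs (x - y)) * ((r^2)^n))
                 (v + (Rabs (x - y)) * (/ (1 - r^2)))).
  { apply plusR; auto. apply scalR. apply geom_r2; auto. }
  apply is_series_unique in Hv'. apply is_series_unique in Hb.
  replace (v + / (1 - r ^ 2) * Rabs (x - y)) with (v + Rabs (x - y) * / (1 - r ^ 2)) by ring.
  rewrite <- Hv', <- Hb. apply Series_le.
  - intros n. unfold term; rewrite !term_eq.
    pose proof (kk_bounds (y + phi a1 a2 s n)). assert (0 <= (r^2)^n) by (apply pow_le; nra).
    pose proof (kk_lip (x + phi a1 a2 s n) (y + phi a1 a2 s n)) as HL.
    replace (y + phi a1 a2 s n - (x + phi a1 a2 s n)) with (-(x - y)) in HL by ring.
    rewrite Rabs_Ropp in HL. split; nra.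
  - eexists. apply plusR. apply H. apply scalR. apply geom_r2; auto.
Qed.

Lemma term_0 r a1 a2 th s : term r a1 a2 th s 0%nat = kk th.
Proof. unfold term; rewrite term_eq. simpl. rewrite Rplus_0_r; ring. Qed.

Lemma term_S r a1 a2 th s t :
  term r a1 a2 th s (S t) = r ^ 2 * term r a1 a2 (th + ang a1 a2 (s 0%nat)) (fun n => s (S n)) t.
Proof.
  unfold term; rewrite !term_eq, phi_S. rewrite Rplus_assoc. simpl. ring.
Qed.

Lemma series_cons r a1 a2 th s (v : R) :
  is_series (term r a1 a2 (th + ang a1 a2 (s 0%nat)) (fun n => s (S n))) v ->
  is_series (term r a1 a2 th s) (kk th + r ^ 2 * v).
Proof.
  intros H. apply is_series_decr_1.
  match goal with |- is_series _ ?l => replace l with (r ^ 2 * v) end;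
  [| rewrite term_0; change (r ^ 2 * v = kk th + r ^ 2 * v - kk th); ring]. eapply is_series_ext; [|apply (scalR (r ^ 2) _ _ H)].
  intros n. simpl. rewrite term_S. reflexivity.
Qed.

Lemma series_tail r a1 a2 th s (v : R) : 0 < r ->
  is_series (term r a1 a2 th s) v ->
  is_series (term r a1 a2 (th + ang a1 a2 (s 0%nat)) (fun n => s (S n))) ((v - kk th) / r ^ 2).
Proof.
  intros Hr H.
  assert (H1 : is_series (fun k => term r a1 a2 th s (S k)) (v - kk th)).
  { apply is_series_incr_1. rewrite term_0.
    match goal with |- is_series _ ?l => replace l with v end; [exact H|].
    change (v = v - kk th + kk th); ring. }
  apply (scalR (/ r ^ 2)) in H1.
  assert (r ^ 2 <> 0) by (apply pow_nonzero; lra).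
  unfold Rdiv. rewrite Rmult_comm.
  eapply is_series_ext; [|exact H1].
  intros n. simpl. rewrite term_S. field. simpl in H0. lra.
Qed.

Section S.
Variables (r a1 a2 : R).
Hypothesis Hr : 0 < r < 1.
Let J := Jtilde r a1 a2.
Let L := / (1 - r ^ 2).

Lemma J_char th :
  (forall (v : R) s, is_series (term r a1 a2 th s) v -> J th <= v) /\
  (forall b : R, (forall (v : R) s, is_series (term r a1 a2 th s) v -> b <= v) -> b <= J th).
Proof.
  unfold J, Jtilde, J_star.
  set (E := fun v : R => exists sigma : nat -> bool, is_series _ v).
  destruct (Glb_Rbar_correct E) as [lb glb].
  destruct (term_ex r a1 a2 th (fun _ => true) Hr) as [v0 Hv0].
  assert (E0 : E v0) by (exists (fun _ => true); exact Hv0).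
  assert (Hlb0 : is_lb_Rbar E 0).
  { intros x [s Hs]. simpl. apply (term_nonneg r a1 a2 th s); auto. }
  pose proof (glb _ Hlb0) as G1. pose proof (lb _ E0) as G2.
  destruct (Glb_Rbar E) as [g| |] eqn:Eg; simpl in G1, G2; try contradiction.
  simpl. split.
  - intros v s Hs. specialize (lb v (ex_intro _ s Hs)). exact lb.
  - intros b Hb. assert (Hl : is_lb_Rbar E b).
    { intros x [s Hs]. simpl. exact (Hb x s Hs). }
    specialize (glb _ Hl). exact glb.
Qed.

Lemma J_lip x y : J y <= J x + L * Rabs (x - y).
Proof.
  assert (J y - L * Rabs (x - y) <= J x); [|lra].
  apply (proj2 (J_char x)). intros v s Hs.
  destruct (term_lip r a1 a2 x y s v Hr Hs) as [v' [Hv' Hle]].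
  pose proof (proj1 (J_char y) v' s Hv'). unfold L. lra.
Qed.

Lemma J_sub th b : J th <= kk th + r ^ 2 * J (th + ang a1 a2 b).
Proof.
  assert (Hr2 : 0 < r ^ 2) by (apply pow_lt; lra).
  assert ((J th - kk th) / r ^ 2 <= J (th + ang a1 a2 b)).
  { apply (proj2 (J_char _)). intros v s Hs.
    set (s' := fun n : nat => match n with O => b | S m => s m end).
    assert (Hs' : is_series (term r a1 a2 th s') (kk th + r ^ 2 * v)).
    { apply series_cons. simpl. exact Hs. }
    pose proof (proj1 (J_char th) _ _ Hs').
    apply (Rmult_le_reg_r (r ^ 2)); auto. unfold Rdiv. rewrite Rmult_assoc, Rinv_l by lra. nra. }
  unfold Rdiv in H. apply (Rmult_le_compat_r (r ^ 2)) in H; [|lra].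
  rewrite Rmult_assoc, Rinv_l in H by lra. nra.
Qed.

Lemma J_super th : kk th + r ^ 2 * Rmin (J (th + a1)) (J (th + a2)) <= J th.
Proof.
  assert (Hr2 : 0 < r ^ 2) by (apply pow_lt; lra).
  apply (proj2 (J_char th)). intros v s Hs.
  pose proof (series_tail r a1 a2 th s v ltac:(lra) Hs) as Ht.
  pose proof (proj1 (J_char _) _ _ Ht) as Hj.
  assert (Rmin (J (th + a1)) (J (th + a2)) <= J (th + ang a1 a2 (s 0%nat))).
  { destruct (s 0%nat); simpl; [apply Rmin_l | apply Rmin_r]. }
  assert (Rmin (J (th + a1)) (J (th + a2)) <= (v - kk th) / r ^ 2) by lra.
  unfold Rdiv in H0. apply (Rmult_le_compat_r (r ^ 2)) in H0; [|lra].
  rewrite Rmult_assoc, Rinv_l in H0 by lra. nra.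
Qed.

Lemma G_lip x y : J x - kk x - (J y - kk y) <= r ^ 2 * (L * Rabs (x - y)).
Proof.
  assert (Hr2 : 0 < r ^ 2) by (apply pow_lt; lra).
  pose proof (J_super y) as Hs.
  destruct (Rle_dec (J (y + a1)) (J (y + a2))) as [Hle|Hle].
  - rewrite Rmin_left in Hs by lra.
    pose proof (J_sub x true) as Hx. simpl in Hx.
    pose proof (J_lip (y + a1) (x + a1)) as Hl.
    replace (y + a1 - (x + a1)) with (- (x - y)) in Hl by ring. rewrite Rabs_Ropp in Hl.
    nra.
  - rewrite Rmin_right in Hs by lra.
    pose proof (J_sub x false) as Hx. simpl in Hx.
    pose proof (J_lip (y + a2) (x + a2)) as Hl.
    replace (y + a2 - (x + a2)) with (- (x - y)) in Hl by ring. rewrite Rabs_Ropp in Hl.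
    nra.
Qed.

End S.

Lemma deriv_bound (F : R -> R) x e C :
  is_derive F x e -> (forall h, F (x + h) - F x <= C * Rabs h) -> Rabs e <= C.
Proof.
  intros Hd Hb. apply is_derive_Reals in Hd.
  destruct (Rle_dec (Rabs e) C) as [ok|nok]; auto. exfalso.
  assert (Heps : 0 < Rabs e - C) by lra.
  destruct (Hd (Rabs e - C) Heps) as [d Hdel].
  pose proof (cond_pos d) as dpos.
  destruct (Rle_dec 0 e) as [He|He].
  - rewrite Rabs_right in * by lra.
    set (h := d / 2).
    assert (hp : 0 < h) by (unfold h; lra).
    specialize (Hdel h ltac:(lra) ltac:(rewrite Rabs_right; unfold h; lra)).
    specialize (Hb h). rewrite Rabs_right in Hb by lra.
    set (q := (F (x + h) - F x) / h) in Hdel.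
    assert (Eq : F (x + h) - F x = q * h) by (unfold q; field; lra).
    apply Rabs_def2 in Hdel. nra.
  - rewrite Rabs_left in * by lra.
    set (h := - (d / 2)).
    assert (hp : h < 0) by (unfold h; lra).
    specialize (Hdel h ltac:(lra) ltac:(rewrite Rabs_left; unfold h; lra)).
    specialize (Hb h). rewrite Rabs_left in Hb by lra.
    set (q := (F (x + h) - F x) / h) in Hdel.
    assert (Eq : F (x + h) - F x = q * h) by (unfold q; field; lra).
    apply Rabs_def2 in Hdel. nra.
Qed.

Definition kpart r b x := kk x + r ^ 2 * kk (x + b).

Lemma kpart_derive r b x :
  is_derive (kpart r b) x (2 * sin x * cos x + r ^ 2 * (2 * sin (x + b) * cos (x + b))).
Proof.
  unfold kpart, kk. auto_derive; auto. ring.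
Qed.

Lemma sin_lb3 a : 0 <= a <= PI -> a - a ^ 3 / 6 <= sin a.
Proof.
  intros H. pose proof (sin_bound a 0 (proj1 H) (proj2 H)) as [Hl _].
  unfold sin_approx, sin_term in Hl. simpl in Hl. simpl. lra.
Qed.

Lemma F_bound r a1 a2 b nu m : 0 < r < 1 ->
  Jtilde r a1 a2 (nu + ang a1 a2 b) = m ->
  Jtilde r a1 a2 nu = kk nu + r ^ 2 * m ->
  forall h, (Jtilde r a1 a2 (nu + h) - kpart r (ang a1 a2 b) (nu + h))
            - (Jtilde r a1 a2 nu - kpart r (ang a1 a2 b) nu)
            <= (r ^ 2 * (r ^ 2 * / (1 - r ^ 2))) * Rabs h.
Proof.
  intros Hr Hm HJ h. set (J := Jtilde r a1 a2). fold J in Hm, HJ.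
  set (bb := ang a1 a2 b) in *.
  pose proof (J_sub r a1 a2 Hr (nu + h) b) as H1. fold J bb in H1.
  pose proof (G_lip r a1 a2 Hr (nu + h + bb) (nu + bb)) as H2. fold J in H2.
  replace (nu + h + bb - (nu + bb)) with h in H2 by ring.
  replace (nu + h + bb) with (nu + bb + h) in * by ring.
  rewrite Hm in H2. unfold kpart. rewrite HJ.
  replace (nu + h + bb) with (nu + bb + h) by ring.
  set (r2 := r ^ 2) in *.
  assert (0 < r2) by (unfold r2; apply pow_lt; lra).
  assert (r2 * (J (nu + bb + h) - kk (nu + bb + h) - (m - kk (nu + bb))) <= r2 * (r2 * (/ (1 - r2) * Rabs h))).
  { apply Rmult_le_compat_l; [lra|]. exact H2. }
  nra.
Qed.

Theorem lemma8 (alpha : R) :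
  PI / 8 < alpha < 3 * PI / 8 ->
  (forall p q : Z, q <> 0%Z -> alpha / PI <> IZR p / IZR q) ->
  forall nu : R,
    (PI / 4 - alpha) - (1/100) < nu < (PI / 4 - alpha) + (1/100) ->
    Jtilde (1/100) alpha (alpha - PI / 2) (nu + alpha)
      - Jtilde (1/100) alpha (alpha - PI / 2) (nu + (alpha - PI / 2)) = 0 ->
    ~ ex_derive (Jtilde (1/100) alpha (alpha - PI / 2)) nu.
Proof.
  intros _ _ nu Hnu HD [d Hd].
  set (r := 1/100) in *. set (a2 := alpha - PI / 2) in *.
  set (J := Jtilde r alpha a2) in *.
  revert d Hd. change (forall d : R, is_derive J nu d -> False). intros d Hd.
  assert (Hr : 0 < r < 1) by (unfold r; lra).
  set (m := J (nu + alpha)).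
  assert (Hm1 : J (nu + ang alpha a2 true) = m) by reflexivity.
  assert (Hm2 : J (nu + ang alpha a2 false) = m) by (simpl; unfold m; lra).
  assert (HJ : J nu = kk nu + r ^ 2 * m).
  { pose proof (J_sub r alpha a2 Hr nu true) as H1. pose proof (J_super r alpha a2 Hr nu) as H2.
    fold J in H1, H2. simpl in H1. fold m in H1, H2.
    replace (J (nu + a2)) with m in H2 by (unfold m; lra).
    rewrite Rmin_left in H2 by lra. lra. }
  set (C := r ^ 2 * (r ^ 2 * / (1 - r ^ 2))).
  assert (Hb : forall b, Rabs (d - (2 * sin nu * cos nu + r ^ 2 * (2 * sin (nu + ang alpha a2 b) * cos (nu + ang alpha a2 b)))) <= C).
  { intros b.
    apply (deriv_bound (fun x => J x - kpart r (ang alpha a2 b) x) nu).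
    - apply (is_derive_minus J (kpart r (ang alpha a2 b))). exact Hd. apply kpart_derive.
    - apply (F_bound r alpha a2 b nu m); auto. destruct b; auto. }
  pose proof (Hb true) as B1. pose proof (Hb false) as B2. simpl in B1, B2.
  set (u := nu + alpha) in *.
  replace (nu + a2) with (u - PI / 2) in B2 by (unfold u, a2; ring).
  rewrite sin_minus, cos_minus, sin_PI2, cos_PI2 in B2.
  assert (Hu : 0 <= u <= PI /\ 0 <= PI / 2 - u <= PI).
  { pose proof PI2_1. pose proof PI_4. unfold u. unfold r in Hnu. lra. }
  assert (Hu2 : 1/2 - 1/100 <= u <= 1 + 1/100 /\ 1/2 - 1/100 <= PI/2 - u <= 1 + 1/100).
  { pose proof PI2_1. pose proof PI_4. unfold u. unfold r in Hnu. lra. }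
  pose proof (sin_lb3 u (proj1 Hu)) as S1.
  pose proof (sin_lb3 (PI / 2 - u) (proj2 Hu)) as S2. rewrite sin_shift in S2.
  assert (P1 : 2/5 <= sin u).
  { clearbody u. clear - S1 Hu2. destruct Hu2 as [[A1 A2] _]. simpl in S1.
    assert (u * u <= (101/100) * (101/100)) by nra. nra. }
  assert (P2 : 2/5 <= cos u).
  { clearbody u. clear - S2 Hu2. destruct Hu2 as [_ [A1 A2]]. set (w := PI / 2 - u) in *. clearbody w. simpl in S2.
    assert (w * w <= (101/100) * (101/100)) by nra. nra. }
  assert (Cv : C = 1/10000 * (1/10000 * (10000/9999))) by (unfold C, r; simpl; field).
  replace (r * (r * 1)) with (1/10000) in B1, B2 by (unfold r; field).
  rewrite Cv in B1, B2.
  assert (Psc : 4/25 <= sin u * cos u) by nra.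
  apply Rabs_le_between in B1. apply Rabs_le_between in B2.
  clearbody u r. clear - B1 B2 Psc. lra.
Qed.
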